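(* Let $G$ be a graph with graph Laplacian $\mathbf{L}$ and normalized graph Laplacian $\tilde{\mathbf{L}}$. If for a node-level positional encoding $\mathbf{Q}\in\mathbb{R}^{n\times d'}$ with compact domain there exist matrices $\mathbf{W}^Q,\mathbf{W}^K$ such that $$\frac{1}{\sqrt{d_k}}(\mathbf{Q}\mathbf{W}^Q)(\mathbf{Q}\mathbf{W}^K)^T=\tilde{\mathbf{L}},$$ then there exists a parameterization of the structural embeddings $\mathbf{P}$ with $\mathbf{Q}$ as node-level positional encoding such that $\mathbf{P}$ is sufficiently node- and adjacency-identifying.
   Context: Graphs are finite, undirected, without self-loops and without isolated nodes, with $n$ nodes, adjacency matrix $\mathbf{A}(G)$, degree matrix $\mathbf{D}$; $\mathbf{L}=\mathbf{D}-\mathbf{A}(G)$, $\tilde{\mathbf{L}}=\mathbf{I}-\mathbf{D}^{-1/2}\mathbf{A}(G)\mathbf{D}^{-1/2}$; $d_k>0$ is fixed. Structural embeddings with node-level positional encoding $\mathbf{Q}$: $\mathbf{P}(v)=\mathsf{FFN}(\mathrm{emb}_{\deg}(v)+\mathbf{Q}(v))$, where $\mathrm{emb}_{\deg}$ is a learnable embedding of the degree of $v$ and $\mathsf{FFN}$ an MLP (both parametrized; the embedding dimension is also a parameter). With $\tilde{\mathbf{P}}=\frac{1}{\sqrt{d_k}}\mathbf{P}\mathbf{W}^Q(\mathbf{P}\mathbf{W}^K)^T$: $\mathbf{P}$ is node-identifying if for some $\mathbf{W}^Q,\mathbf{W}^K$: $\tilde{\mathbf{P}}_{ij}=\max_k\tilde{\mathbf{P}}_{ik}\iff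 i=j$; adjacency-identifying if for some $\mathbf{W}^Q,\mathbf{W}^K$: $\tilde{\mathbf{P}}_{ij}=\max_k\tilde{\mathbf{P}}_{ik}\iff\mathbf{A}(G)_{ij}=1$. Parametrized structural embeddings are sufficiently node-identifying (resp. adjacency-identifying) if there is a node-identifying (resp. adjacency-identifying) matrix $\mathbf{P}^*$ such that for every $\varepsilon>0$ some parameter choice yields embeddings within Frobenius distance $\varepsilon$ of $\mathbf{P}^*$. *)

(* Defs.v *)
From HB Require Import structures.
From mathcomp Require Import all_boot all_order all_algebra.
From mathcomp Require Import reals.
Set Implicit Arguments. Unset Strict Implicit. Unset Printing Implicit Defensive.
Import Order.TTheory GRing.Theory Num.Theory.
Local Open Scope ring_scope.

Section Defs.
Variable R : realType.

Definition simple_graph_no_isolated (n : nat) (adj : rel 'I_n) : Prop :=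
  [/\ symmetric adj, irreflexive adj & forall i : 'I_n, exists j, adj i j].

Definition adjmx (n : nat) (adj : rel 'I_n) : 'M[R]_n :=
  \matrix_(i, j) (adj i j)%:R.

Definition degree (n : nat) (adj : rel 'I_n) (i : 'I_n) : nat :=
  #|[set j | adj i j]|.

Definition degmx (n : nat) (adj : rel 'I_n) : 'M[R]_n :=
  diag_mx (\row_i (degree adj i)%:R).

Definition degmx_invsqrt (n : nat) (adj : rel 'I_n) : 'M[R]_n :=
  diag_mx (\row_i (Num.sqrt (degree adj i)%:R)^-1).

Definition laplacian (n : nat) (adj : rel 'I_n) : 'M[R]_n :=
  degmx adj - adjmx adj.

Definition norm_laplacian (n : nat) (adj : rel 'I_n) : 'M[R]_n :=
  1%:M - degmx_invsqrt adj *m adjmx adj *m degmx_invsqrt adj.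

Definition attn_scores (dk n d : nat) (P : 'M[R]_(n, d))
  (WQ WK : 'M[R]_(d, dk)) : 'M[R]_n :=
  (Num.sqrt (dk%:R))^-1 *: ((P *m WQ) *m (P *m WK)^T).

Definition row_argmax (n : nat) (M : 'M[R]_n) (i j : 'I_n) : Prop :=
  forall k : 'I_n, M i k <= M i j.

Definition node_identifying (dk n d : nat) (P : 'M[R]_(n, d)) : Prop :=
  exists WQ WK : 'M[R]_(d, dk),
    forall i j : 'I_n, row_argmax (attn_scores P WQ WK) i j <-> i = j.

Definition adjacency_identifying (dk n d : nat) (adj : rel 'I_n)
  (P : 'M[R]_(n, d)) : Prop :=
  exists WQ WK : 'M[R]_(d, dk),
    forall i j : 'I_n,
      row_argmax (attn_scores P WQ WK) i j <-> adjmx adj i j = 1.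

Definition frobenius (m n : nat) (M : 'M[R]_(m, n)) : R :=
  Num.sqrt (\sum_i \sum_j M i j ^+ 2).

Inductive mlp : nat -> nat -> Type :=
| mlp_out (din dout : nat) of 'M[R]_(din, dout) & 'rV[R]_dout : mlp din dout
| mlp_hidden (din h dout : nat) of 'M[R]_(din, h) & 'rV[R]_h & mlp h dout
    : mlp din dout.

Definition relu_vec (k : nat) (x : 'rV[R]_k) : 'rV[R]_k :=
  map_mx (fun a => Num.max a 0) x.

Fixpoint mlp_eval (din dout : nat) (f : mlp din dout) : 'rV[R]_din -> 'rV[R]_dout :=
  match f in mlp a b return 'rV[R]_a -> 'rV[R]_b with
  | mlp_out _ _ W b => fun x => x *m W + b
  | mlp_hidden _ _ _ W b g => fun x => mlp_eval g (relu_vec (x *m W + b))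
  end.

(* P(v) = FFN(emb_deg(deg v) + Q(v)); the degree embedding is a learnable
   lookup table nat -> R^{d'}, the FFN is a ReLU MLP R^{d'} -> R^d. *)
Definition struct_emb (n d' d : nat) (adj : rel 'I_n) (Q : 'M[R]_(n, d'))
  (emb : nat -> 'rV[R]_d') (ffn : mlp d' d) : 'M[R]_(n, d) :=
  \matrix_(v < n) mlp_eval ffn (emb (degree adj v) + row v Q).

Definition suff_node_identifying (dk n d' d : nat) (adj : rel 'I_n)
  (Q : 'M[R]_(n, d')) : Prop :=
  exists Pstar : 'M[R]_(n, d), node_identifying dk Pstar /\
    forall eps : R, 0 < eps ->
      exists (emb : nat -> 'rV[R]_d') (ffn : mlp d' d),
        frobenius (struct_emb adj Q emb ffn - Pstar) < eps.

Definition suff_adjacency_identifying (dk n d' d : nat) (adj : rel 'I_n)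
  (Q : 'M[R]_(n, d')) : Prop :=
  exists Pstar : 'M[R]_(n, d), adjacency_identifying dk adj Pstar /\
    forall eps : R, 0 < eps ->
      exists (emb : nat -> 'rV[R]_d') (ffn : mlp d' d),
        frobenius (struct_emb adj Q emb ffn - Pstar) < eps.

End Defs.

(* Main.v *)
Require Import Defs.
From HB Require Import structures.
From mathcomp Require Import all_boot all_order all_algebra.
From mathcomp Require Import reals.
Import Order.TTheory GRing.Theory Num.Theory.
Local Open Scope ring_scope.

Section Aux.
Variables (R : realType) (n : nat) (adj : rel 'I_n).
Hypothesis Hg : simple_graph_no_isolated adj.

Lemma deg_pos i : (0 < degree adj i)%N.
Proof.
case: Hg => _ _ /(_ i) [j Hj]; rewrite /degree card_gt0; apply/set0Pn.
by exists j; rewrite inE.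
Qed.

Lemma sq_pos i : 0 < Num.sqrt ((degree adj i)%:R : R).
Proof. by rewrite sqrtr_gt0 ltr0n deg_pos. Qed.

Lemma Lt_entry i j : norm_laplacian R adj i j =
  (i == j)%:R - (Num.sqrt ((degree adj i)%:R : R))^-1 * (adj i j)%:R
     * (Num.sqrt ((degree adj j)%:R : R))^-1.
Proof.
rewrite /norm_laplacian /degmx_invsqrt [in LHS]mxE mul_mx_diag mul_diag_mx !mxE.
by [].
Qed.

End Aux.

Theorem lemmaF13 (R : realType) (dk : nat) (n : nat) (adj : rel 'I_n)
  (d' : nat) (Q : 'M[R]_(n, d')) :
  (0 < dk)%N ->
  simple_graph_no_isolated adj ->
  (exists WQ WK : 'M[R]_(d', dk), attn_scores Q WQ WK = norm_laplacian R adj) ->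
  exists d : nat,
    suff_node_identifying dk d adj Q /\ suff_adjacency_identifying dk d adj Q.
Proof.
move=> _ Hg [WQ [WK HL]].
set c := (Num.sqrt (dk%:R : R))^-1.
set r : 'M[R]_n := diag_mx (\row_i Num.sqrt ((degree adj i)%:R : R)).
set P : 'M[R]_(n, dk + dk) := row_mx (Q *m WQ) (r *m (Q *m WK)).
set W1 : 'M[R]_(d', n) := c *: (WQ *m (Q *m WK)^T).
have Hreal : forall eps : R, 0 < eps -> exists (emb : nat -> 'rV[R]_d')
     (ffn : mlp R d' (dk + dk)), frobenius (struct_emb adj Q emb ffn - P) < eps.
  move=> eps Heps; exists (fun _ => 0), (mlp_hidden W1 0 (mlp_out P 0)).
  have -> : struct_emb adj Q (fun _ => 0) (mlp_hidden W1 0 (mlp_out P 0)) = P.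
    apply/matrixP => v j; rewrite /struct_emb mxE /=.
    have -> : relu_vec ((0 + row v Q) *m W1 + 0) = row v (1%:M : 'M[R]_n).
      rewrite add0r addr0 -row_mul.
      have -> : Q *m W1 = norm_laplacian R adj.
        by rewrite -HL /W1 /attn_scores -scalemxAr mulmxA.
      apply/rowP => k; rewrite /relu_vec mxE (_ : row v (norm_laplacian R adj) 0 k = norm_laplacian R adj v k); last by rewrite mxE.
      rewrite Lt_entry // [RHS]mxE mxE.
      case: (eqVneq v k) => [<-|Hvk].
        rewrite ?eqxx /=.
        case: Hg => _ Hirr _; rewrite Hirr mulr0 mul0r subr0.
        by rewrite /Num.max ltr10.
      rewrite /= mulr0n sub0r; apply/max_idPr.
      rewrite oppr_le0 mulr_ge0 // ?mulr_ge0 // ?invr_ge0 ?sqrtr_ge0 //.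
    by rewrite addr0 -row_mul mul1mx mxE.
  rewrite subrr /frobenius big1 ?sqrtr0 // => i _.
  by rewrite big1 // => j _; rewrite mxE expr0n.
have Hsc : forall s : R, attn_scores P (s *: col_mx 1%:M 0) (col_mx 0 1%:M)
    = s *: (norm_laplacian R adj *m r).
  move=> s; rewrite /attn_scores -scalemxAr !mul_row_col !mulmx0 !mulmx1 addr0 add0r.
  by rewrite -HL trmx_mul tr_diag_mx /attn_scores -!scalemxAl !mulmxA !scalerA mulrC.
have Hent : forall i j : 'I_n, (norm_laplacian R adj *m r) i j =
    if i == j then Num.sqrt ((degree adj i)%:R : R)
    else - ((Num.sqrt ((degree adj i)%:R : R))^-1 * (adj i j)%:R).
  move=> i j; rewrite mul_mx_diag mxE Lt_entry // mxE.
  case: (eqVneq i j) => [<-|Hij].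
    by case: Hg => _ Hirr _; rewrite Hirr mulr0 mul0r subr0 mul1r.
  rewrite (_ : (false%:R : R) = 0) // sub0r mulNr divfK //.
  by rewrite gt_eqF // (sq_pos _ _ _ Hg j).
exists (dk + dk)%N; split; exists P; split => //.
- exists (1 *: col_mx 1%:M 0), (col_mx 0 1%:M) => i j.
  rewrite Hsc scale1r /row_argmax; split.
  + move=> Hm; apply/eqP; apply/negPn/negP => Hij.
    have := Hm i; rewrite !Hent eqxx (negbTE Hij) => H.
    have := lt_le_trans (sq_pos _ _ _ Hg i) H.
    by rewrite oppr_gt0 ltNge mulr_ge0 // invr_ge0 sqrtr_ge0.
  + move=> <- k; rewrite !Hent eqxx; case: eqP => // _.
    apply: le_trans (ltW (sq_pos _ _ _ Hg i)).
    by rewrite oppr_le0 mulr_ge0 // invr_ge0 sqrtr_ge0.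
- exists ((-1) *: col_mx 1%:M 0), (col_mx 0 1%:M) => i j.
  rewrite Hsc /row_argmax /adjmx [in X in _ <-> X]mxE.
  have Hs : 0 < (Num.sqrt ((degree adj i)%:R : R))^-1 by rewrite invr_gt0 (sq_pos _ _ _ Hg i).
  have Hval : forall k, ((-1) *: (norm_laplacian R adj *m r)) i k =
      if i == k then - Num.sqrt ((degree adj i)%:R : R)
      else (Num.sqrt ((degree adj i)%:R : R))^-1 * (adj i k)%:R.
    by move=> k; rewrite mxE Hent mulN1r; case: eqP => _ //=; rewrite opprK.
  split.
  + move=> Hm; case: Hg => _ Hirr /(_ i) [k Hk].
    have := Hm k; rewrite !Hval.
    have Hik : (i == k) = false by apply/negbTE/eqP => E; move: Hk; rewrite -E Hirr.
    rewrite Hik Hk mulr1.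
    case: (eqVneq i j) => [_ H|_].
      have := lt_le_trans Hs H; rewrite oppr_gt0 ltNge sqrtr_ge0 //.
    by case: (adj i j) => //; rewrite mulr0 => H; move: (lt_le_trans Hs H); rewrite ltxx.
  + case Hij: (adj i j); last by move=> /eqP; rewrite eq_sym oner_eq0.
    move=> _ k.
    have Hne : (i == j) = false.
      by apply/negbTE/eqP => E; case: Hg => _ Hirr _; move: Hij; rewrite -E Hirr.
    rewrite !Hval Hne Hij mulr1.
    case: (eqVneq i k) => _.
      by apply: le_trans (ltW Hs); rewrite oppr_le0 sqrtr_ge0.
    by case: (adj i k); rewrite ?mulr1 // mulr0 ltW.
Qed.
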